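(* Let $\mathfrak H$ be a P-module. There exist $n\geq 1$, irreducible sub-modules $\mathfrak H_i\subset\mathfrak H$ for $1\leq i\leq n$, and a vector subspace $\mathfrak H_{\mathrm{res}}\subset\mathfrak H$ containing no non-zero sub-module, such that $\mathfrak H=\left(\bigoplus_{i=1}^n\mathfrak H_i\right)\oplus\mathfrak H_{\mathrm{res}}$ (orthogonal direct sum).
   Context: A Pythagorean module (P-module) is a triple $(A,B,\mathfrak H)$ where $\mathfrak H$ is a finite-dimensional complex Hilbert space and $A,B$ are linear operators on $\mathfrak H$ with $A^*A+B^*B=\mathrm{id}_{\mathfrak H}$. A sub-module is a subspace $\mathfrak K\subset\mathfrak H$ with $A\mathfrak K\subset\mathfrak K$ and $B\mathfrak K\subset\mathfrak K$ (no invariance under $A^*,B^*$ is required), equipped with the restrictions of $A,B$. A P-module is irreducible if it has no sub-module other than $\{0\}$ and itself. *)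

(* Defs.v *)
(* A finite-dimensional complex Hilbert space of dimension d
   is modelled as the row vectors 'rV[C]_d with the standard inner product
   <u, v> = u *m (adjmx v), over an arbitrary numClosedFieldType C (which
   includes the complex numbers).  A linear operator is a matrix A acting on
   row vectors from the right: u |-> u *m A.  Its Hilbert adjoint is then
   u |-> u *m adjmx A.  Subspaces are row spaces of d x d matrices (mxalgebra). *)
From HB Require Import structures.
From mathcomp Require Import all_boot all_order all_algebra.
Set Implicit Arguments. Unset Strict Implicit. Unset Printing Implicit Defensive.
Import Order.TTheory GRing.Theory Num.Theory.
Local Open Scope ring_scope.

Definition adjmx (C : numClosedFieldType) (m n : nat) (A : 'M[C]_(m, n)) : 'M[C]_(n, m) :=
  map_mx Num.conj (A^T).

(* (A, B, C^d) is a P-module: A^*A + B^*B = id.  With operators acting on the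
   right of row vectors, the composite A^* o A is the matrix A *m adjmx A. *)
Definition Pmodule (C : numClosedFieldType) (d : nat) (A B : 'M[C]_d) : Prop :=
  A *m adjmx A + B *m adjmx B = 1%:M.

Definition submodule (C : numClosedFieldType) (d : nat) (A B K : 'M[C]_d) : Prop :=
  (K *m A <= K)%MS /\ (K *m B <= K)%MS.

Definition irreducible_submodule (C : numClosedFieldType) (d : nat) (A B K : 'M[C]_d) : Prop :=
  submodule A B K /\
  forall L : 'M[C]_d, (L <= K)%MS -> submodule A B L -> (L == (0 : 'M[C]_d))%MS \/ (L == K)%MS.

Definition no_nonzero_submodule (C : numClosedFieldType) (d : nat) (A B U : 'M[C]_d) : Prop :=
  forall L : 'M[C]_d, (L <= U)%MS -> submodule A B L -> (L == (0 : 'M[C]_d))%MS.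

Definition mx_orthogonal (C : numClosedFieldType) (d : nat) (U V : 'M[C]_d) : Prop :=
  U *m adjmx V = 0.

(* Main.v *)
Require Import Defs.
From HB Require Import structures.
From mathcomp Require Import all_boot all_order all_algebra.
From Stdlib Require Import Classical.
From mathcomp Require Import zify.
Import Order.TTheory GRing.Theory Num.Theory.
Local Open Scope ring_scope.

Section Aux.
Variables (C : numClosedFieldType) (d : nat).

Lemma adjmxM m n p (X : 'M[C]_(m, n)) (Y : 'M[C]_(n, p)) :
  adjmx (X *m Y) = adjmx Y *m adjmx X.
Proof. by rewrite /adjmx trmx_mul map_mxM. Qed.

Lemma adjmxK m n (X : 'M[C]_(m, n)) : adjmx (adjmx X) = X.
Proof. by apply/matrixP=> i j; rewrite /adjmx !mxE conjCK. Qed.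

Lemma adjmx0 m n : adjmx (0 : 'M[C]_(m, n)) = 0.
Proof. by apply/matrixP=> i j; rewrite /adjmx !mxE conjC0. Qed.

Lemma rank_adjmx m n (X : 'M[C]_(m, n)) : \rank (adjmx X) = \rank X.
Proof. by rewrite /adjmx mxrank_map mxrank_tr. Qed.

Lemma pos_def m n (X : 'M[C]_(m, n)) : X *m adjmx X = 0 -> X = 0.
Proof.
move=> H; apply/matrixP=> i j; rewrite mxE.
have := congr1 (fun M : 'M[C]_m => M i i) H; rewrite !mxE /adjmx.
under eq_bigr do rewrite !mxE.
move/eqP; rewrite psumr_eq0; last by move=> k _; exact: mul_conjC_ge0.
by move/allP/(_ j (mem_index_enum _)); rewrite mul_conjC_eq0 => /eqP.
Qed.

Lemma orth_ker (X L : 'M[C]_d) : (X <= kermx (adjmx L))%MS ->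
  mx_orthogonal X L /\ mx_orthogonal L X.
Proof.
move/sub_kermxP=> H; split => //.
by rewrite /mx_orthogonal -[L]adjmxK -adjmxM H adjmx0.
Qed.

Lemma cap_ker0 (X L : 'M[C]_d) : (X <= L)%MS -> (X <= kermx (adjmx L))%MS -> X = 0.
Proof.
move=> /submxP[W ->] /sub_kermxP H; apply: pos_def.
by rewrite adjmxM mulmxA H mul0mx.
Qed.

Lemma sum_perp (L U : 'M[C]_d) : (L <= U)%MS ->
  ((L + (U :&: kermx (adjmx L)))%MS == U)%MS.
Proof.
move=> LU; set K := kermx (adjmx L).
have cap0 : \rank (L :&: (U :&: K))%MS = 0%N.
  apply/eqP; rewrite mxrank_eq0; apply/eqP.
  apply: cap_ker0; first exact: capmxSl.
  exact: submx_trans (capmxSr _ _) (capmxSr _ _).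
have le : ((L + (U :&: K)) <= U)%MS by rewrite addsmx_sub LU capmxSl.
rewrite -(geq_leqif (mxrank_leqif_eq le)).
have h1 := mxrank_sum_cap L (U :&: K)%MS.
have h2 := mxrank_sum_cap U K.
have hK : \rank K = (d - \rank L)%N by rewrite mxrank_ker rank_adjmx.
have hU : (\rank (U + K) <= d)%N by exact: rank_leq_col.
have hL : (\rank L <= d)%N by exact: rank_leq_col.
lia.
Qed.

Variables A B : 'M[C]_d.

Lemma irr0 : irreducible_submodule A B 0.
Proof.
split; first by split; rewrite mul0mx sub0mx.
by move=> L; rewrite submx0 => /eqP -> _; left; rewrite eqxx sub0mx.
Qed.

Lemma orth0l (X : 'M[C]_d) : mx_orthogonal 0 X.
Proof. by rewrite /mx_orthogonal mul0mx. Qed.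

Lemma orth0r (X : 'M[C]_d) : mx_orthogonal X 0.
Proof. by rewrite /mx_orthogonal adjmx0 mulmx0. Qed.

Lemma exists_irr (L0 : 'M[C]_d) : submodule A B L0 -> ~~ (L0 == (0 : 'M[C]_d))%MS ->
  exists L, irreducible_submodule A B L /\ (L <= L0)%MS /\ ~~ (L == (0 : 'M[C]_d))%MS.
Proof.
have [k] := ubnP (\rank L0); elim: k L0 => // k IH L0 ltk sub nz.
case: (classic (exists L', (L' <= L0)%MS /\ submodule A B L' /\
          ~~ (L' == (0 : 'M[C]_d))%MS /\ ~~ (L' == L0)%MS)).
  move=> [L' [le [s [nz' ne]]]].
  have lt : (\rank L' < \rank L0)%N by rewrite (ltn_leqif (mxrank_leqif_eq le)).
  have [|L [irr [le' nzL]]] := IH L' _ s nz'; first by lia.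
  by exists L; split => //; split => //; exact: submx_trans le' le.
move=> H; exists L0; split; last by rewrite submx_refl. split => //.
move=> L le s; case: (boolP (L == (0 : 'M[C]_d))%MS) => [|nz']; first by left.
right; case: (boolP (L == L0)%MS) => // ne; exfalso; apply: H; exists L; tauto.
Qed.

Lemma decomp (U : 'M[C]_d) : exists (s : seq 'M[C]_d) (Hres : 'M[C]_d),
  [/\ s != [::],
      forall i, irreducible_submodule A B (nth 0 s i) /\ (nth 0 s i <= U)%MS,
      no_nonzero_submodule A B Hres /\ (Hres <= U)%MS,
      (forall i j, i != j -> mx_orthogonal (nth 0 s i) (nth 0 s j)) /\
        (forall i, mx_orthogonal (nth 0 s i) Hres)
    & ((\sum_(X <- s) X + Hres)%MS == U)%MS].
Proof.
have [k] := ubnP (\rank U); elim: k U => // k IH U ltk.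
case: (classic (no_nonzero_submodule A B U)) => [nzs|nnz].
  exists [:: 0], U; split => //.
  - move=> [|[|i]] /=; split; rewrite ?sub0mx //; exact: irr0.
  - split; first by move=> [|[|i]] [|[|j]] _; apply: orth0l.
    by move=> [|[|i]]; apply: orth0l.
  - by apply/eqmxP; rewrite big_seq1; exact: adds0mx.
have [L0 [le0 [s0 nz0]]] : exists L0, (L0 <= U)%MS /\ submodule A B L0 /\ ~~ (L0 == (0 : 'M[C]_d))%MS.
  apply: NNPP => H; apply: nnz => L le s.
  case: (boolP (L == (0 : 'M[C]_d))%MS) => // nz; exfalso; apply: H; exists L; tauto.
have [L [irrL [leL nzL]]] := exists_irr L0 s0 nz0.
have LU : (L <= U)%MS by exact: submx_trans leL le0.
set K := kermx (adjmx L).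
set U' := (U :&: K)%MS.
have lt : (\rank U' < \rank U)%N.
  rewrite (ltn_leqif (mxrank_leqif_eq (capmxSl U K))); apply/negP => eqU.
  move: nzL; rewrite (@cap_ker0 L L (submx_refl L)) ?sub0mx //.
  apply: submx_trans LU _; apply: submx_trans (capmxSr U K).
  by case/andP: eqU.
have [|s' [H' [_ Hs' [HH' HU'] [Ho Hor] Hsum]]] := IH U' _; first by lia.
have inK (X : 'M[C]_d) : (X <= U')%MS -> (X <= K)%MS by move=> h; exact: submx_trans h (capmxSr _ _).
have inU (X : 'M[C]_d) : (X <= U')%MS -> (X <= U)%MS by move=> h; exact: submx_trans h (capmxSl _ _).
exists (L :: s'), H'; split => //.
- move=> [|i] /=; first by split.
  by have [? ?] := Hs' i; split => //; exact: inU.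
- by split => //; exact: inU.
- split.
    move=> [|i] [|j] //= ne.
    + exact: (orth_ker _ _ (inK _ (Hs' j).2)).2.
    + exact: (orth_ker _ _ (inK _ (Hs' i).2)).1.
    + exact: Ho.
  move=> [|i] /=; last exact: Hor.
  exact: (orth_ker _ _ (inK _ HU')).2.
- apply/eqmxP; rewrite big_cons -addsmxA.
  apply: eqmx_trans (adds_eqmx (eqmx_refl L) (eqmxP Hsum)) _.
  exact/eqmxP/sum_perp/LU.
Qed.
End Aux.

Theorem lemma2p1 (C : numClosedFieldType) (d : nat) (A B : 'M[C]_d) :
  Pmodule A B ->
  exists (n : nat) (Hs : 'I_n -> 'M[C]_d) (Hres : 'M[C]_d),
    [/\ (0 < n)%N,
        forall i, irreducible_submodule A B (Hs i),
        no_nonzero_submodule A B Hres,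
        (forall i j, i != j -> mx_orthogonal (Hs i) (Hs j))
          /\ (forall i, mx_orthogonal (Hs i) Hres)
      & ((\sum_i Hs i + Hres)%MS == 1%:M)%MS].
Proof.
move=> _.
have [s [H [ne Hs [HH _] [Ho Hor] Hsum]]] := @decomp C d A B 1%:M.
exists (size s), (fun i => nth 0 s i), H; split.
- by rewrite lt0n size_eq0.
- by move=> i; exact: (Hs i).1.
- exact: HH.
- split; last by move=> i; exact: Hor.
  by move=> i j ne'; apply: Ho.
- by rewrite (big_nth 0) big_mkord in Hsum.
Qed.
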